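(* Let $0<s\le1$, let $\Delta_s\subset\mathbb C$ be the closed disk of radius $s$ and $\Delta_s^*=\Delta_s\setminus\{0\}$. Let $g$ be a smooth real-valued function on an open neighbourhood of $\Delta_s^*$, and put $\omega=\frac{i}{\pi}\partial\bar\partial g$, $\eta=\frac{i}{\pi}\bar\partial g$. Suppose $\omega$ is semipositive and that there exist $a\in\mathbb R$ and a subpolynomial function $\mu$ with $-\log\mu(1/|z|)\le g(z)+a\log|z|\le\log\mu(1/|z|)$ on $\Delta_s^*$. Then $\int_{\Delta_s}\omega:=\lim_{\varepsilon\to0}\int_{\Delta_s\setminus\Delta_\varepsilon}\omega$ exists in $\mathbb R$, $\lim_{t\to0}\int_{\partial\Delta_t}\eta=-a$, and $$0\le\int_{\Delta_s}\omega=\int_{\partial\Delta_s}\eta+a.$$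
   Context: A function $\mu\colon\mathbb R_{>0}\to\mathbb R_{>0}$ is subpolynomial if $\lim_{x\to\infty}\mu(x)/x^n=0$ for every $n>0$. A $(1,1)$-form $\omega$ is semipositive if $\int_{\Delta_t}\psi^*\omega\ge0$ for every continuous map $\psi$ from a closed disk $\Delta_t$ into the domain that is holomorphic on the interior. Boundary circles are positively oriented. *)

(* Defs.v *)
(* classical real analysis. The complex plane is modelled as R x R
   (z = x + i y); functions on (subsets of) C are functions R -> R -> R. *)
From Stdlib Require Import Reals ClassicalEpsilon.
Open Scope R_scope.

(* Riemann integral of f over [a,b] if f is Riemann integrable there, 0 otherwise. *)
Definition RInt (f : R -> R) (a b : R) : R :=
  match excluded_middle_informative (inhabited (Riemann_integrable f a b)) with
  | left _ => epsilon (inhabits 0)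
                (fun I => exists pr : Riemann_integrable f a b, RiemannInt pr = I)
  | right _ => 0
  end.

(* derivative of f at x (meaningful when f is differentiable at x) *)
Definition deriv1 (f : R -> R) (x : R) : R :=
  epsilon (inhabits 0) (fun l => derivable_pt_lim f x l).

Definition dist2 (x y x' y' : R) : R := sqrt ((x - x') ^ 2 + (y - y') ^ 2).

Definition open2 (U : R -> R -> Prop) : Prop :=
  forall x y, U x y -> exists d, 0 < d /\ forall x' y', dist2 x' y' x y < d -> U x' y'.

Definition cont_on2 (U : R -> R -> Prop) (f : R -> R -> R) : Prop :=
  forall x y, U x y -> forall e, 0 < e -> exists d, 0 < d /\
    forall x' y', dist2 x' y' x y < d -> Rabs (f x' y' - f x y) < e.

Definition pdx (f : R -> R -> R) (x y : R) : R := deriv1 (fun t => f t y) x.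
Definition pdy (f : R -> R -> R) (x y : R) : R := deriv1 (fun t => f x t) y.

Fixpoint Ck (n : nat) (U : R -> R -> Prop) (f : R -> R -> R) : Prop :=
  match n with
  | O => cont_on2 U f
  | S m => (forall x y, U x y ->
              (exists l, derivable_pt_lim (fun t => f t y) x l) /\
              (exists l, derivable_pt_lim (fun t => f x t) y l))
           /\ Ck m U (pdx f) /\ Ck m U (pdy f)
  end.

Definition smooth_on (U : R -> R -> Prop) (f : R -> R -> R) : Prop :=
  forall n, Ck n U f.

Definition C := (R * R)%type.
Definition Cmul (z w : C) : C :=
  (fst z * fst w - snd z * snd w, fst z * snd w + snd z * fst w).
Definition Ci : C := (0, 1).

(* complex differentiability of psi = u + i v at the point x + i y *)
Definition cdiff_at (u v : R -> R -> R) (x y : R) : Prop :=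
  exists p q : R, forall e, 0 < e -> exists d, 0 < d /\
    forall h k, dist2 h k 0 0 < d ->
      dist2 (u (x + h) (y + k) - u x y - (p * h - q * k))
            (v (x + h) (y + k) - v x y - (q * h + p * k)) 0 0
      <= e * dist2 h k 0 0.

(* integral of the 2-form F dx/\dy over the annulus {r1 <= |z| <= r2}
   (the disk when r1 = 0), computed in polar coordinates *)
Definition polar_int (F : R -> R -> R) (r1 r2 : R) : R :=
  RInt (fun r => r * RInt (fun th => F (r * cos th) (r * sin th)) 0 (2 * PI)) r1 r2.

(* omega = (i/pi) d dbar g = (1/(2 pi)) (g_xx + g_yy) dx/\dy
   (since d dbar g = (1/4) Lap g dz/\dzbar and dz/\dzbar = -2i dx/\dy). *)
Definition omega_coef (g : R -> R -> R) (x y : R) : R :=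
  / (2 * PI) * (pdx (pdx g) x y + pdy (pdy g) x y).

Definition pullback_coef (F : R -> R -> R) (u v : R -> R -> R) (x y : R) : R :=
  F (u x y) (v x y) * (pdx u x y * pdy v x y - pdy u x y * pdx v x y).

Definition semipositive (U : R -> R -> Prop) (g : R -> R -> R) : Prop :=
  forall (t : R) (u v : R -> R -> R),
    0 < t ->
    (forall x y, x ^ 2 + y ^ 2 <= t ^ 2 -> forall e, 0 < e -> exists d, 0 < d /\
       forall x' y', x' ^ 2 + y' ^ 2 <= t ^ 2 -> dist2 x' y' x y < d ->
         dist2 (u x' y') (v x' y') (u x y) (v x y) < e) ->
    (forall x y, x ^ 2 + y ^ 2 < t ^ 2 -> cdiff_at u v x y) ->
    (forall x y, x ^ 2 + y ^ 2 <= t ^ 2 -> U (u x y) (v x y)) ->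
    0 <= polar_int (pullback_coef (omega_coef g) u v) 0 t.

(* eta = (i/pi) dbar g = (i/pi) * (1/2)(g_x + i g_y) * (dx - i dy);
   its value at (x,y) on the tangent vector (vx,vy) *)
Definition eta_at (g : R -> R -> R) (x y vx vy : R) : C :=
  Cmul (Cmul (0, / PI) (/ 2 * pdx g x y, / 2 * pdy g x y)) (vx, - vy).

(* integral of eta over the positively oriented circle |z| = t,
   parametrised by th |-> (t cos th, t sin th), th in [0, 2 pi] *)
Definition eta_circ (g : R -> R -> R) (t : R) : C :=
  (RInt (fun th => fst (eta_at g (t * cos th) (t * sin th) (- t * sin th) (t * cos th))) 0 (2 * PI),
   RInt (fun th => snd (eta_at g (t * cos th) (t * sin th) (- t * sin th) (t * cos th))) 0 (2 * PI)).

Definition lim0plus (F : R -> R) (L : R) : Prop :=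
  forall e, 0 < e -> exists d, 0 < d /\
    forall t, 0 < t < d -> Rabs (F t - L) < e.

Definition subpolynomial (mu : R -> R) : Prop :=
  (forall x, 0 < x -> 0 < mu x) /\
  forall n, 0 < n -> forall e, 0 < e -> exists M,
    forall x, 0 < x -> M < x -> Rabs (mu x / Rpower x n) < e.

(* Main.v *)
From Coquelicot Require Import Coquelicot.
From Stdlib Require Import Reals Lra Psatz ClassicalEpsilon FunctionalExtensionality ZArith.
Require Import Defs.
From Stdlib Require Import Reals.
Open Scope R_scope.
Notation CRInt := Coquelicot.RInt.RInt.

Lemma deriv1_spec f x : (exists l, derivable_pt_lim f x l) -> derivable_pt_lim f x (deriv1 f x).
Proof.
  intros H. unfold deriv1. apply epsilon_spec. exact H.
Qed.

Lemma deriv1_eq f x l : derivable_pt_lim f x l -> deriv1 f x = l.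
Proof.
  intros H. eapply uniqueness_limite. apply deriv1_spec. eauto. exact H.
Qed.

Lemma Defs_RInt_eq f a b : ex_RInt f a b -> Defs.RInt f a b = CRInt f a b.
Proof.
  intros H. unfold Defs.RInt.
  destruct (excluded_middle_informative _) as [Hi|Hn].
  - assert (He : exists I, exists pr : Riemann_integrable f a b, RiemannInt pr = I).
    { exists (RiemannInt (ex_RInt_Reals_0 _ _ _ H)). eauto. }
    destruct (epsilon_spec (inhabits 0) _ He) as [pr Hpr].
    rewrite <- Hpr. symmetry. apply RInt_Reals.
  - exfalso. apply Hn. constructor. apply ex_RInt_Reals_0. exact H.
Qed.

Lemma dist2_le a b c d : dist2 a b c d <= Rabs (a - c) + Rabs (b - d).
Proof.
  unfold dist2. rewrite <- (sqrt_Rsqr (Rabs (a-c) + Rabs (b-d))).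
  2: { pose proof (Rabs_pos (a-c)); pose proof (Rabs_pos (b-d)); lra. }
  apply sqrt_le_1_alt. unfold Rsqr.
  pose proof (Rabs_pos (a-c)); pose proof (Rabs_pos (b-d)).
  rewrite <- (pow2_abs (a-c)), <- (pow2_abs (b-d)). nra.
Qed.

Lemma dist2_self a b : dist2 a b a b = 0.
Proof. unfold dist2. replace ((a-a)^2 + (b-b)^2) with 0 by ring. apply sqrt_0. Qed.

Lemma dist2_pos a b c d : 0 <= dist2 a b c d.
Proof. unfold dist2. apply sqrt_pos. Qed.

Definition C1 (U : R -> R -> Prop) (p : R -> R -> R) : Prop :=
  (forall x y, U x y -> derivable_pt_lim (fun t => p t y) x (pdx p x y) /\
                        derivable_pt_lim (fun t => p x t) y (pdy p x y)) /\
  cont_on2 U (pdx p) /\ cont_on2 U (pdy p) /\ cont_on2 U p.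

Lemma smooth_C1 U p : smooth_on U p -> C1 U p.
Proof.
  intros H. pose proof (H 1%nat) as [H1 [H2 H3]]. pose proof (H 0%nat) as H0.
  simpl in *. split; [|split; [exact H2|split; [exact H3|exact H0]]].
  intros x y Hxy. destruct (H1 x y Hxy) as [[l1 E1] [l2 E2]].
  split; apply deriv1_spec; eauto.
Qed.

Lemma smooth_pdx U p : smooth_on U p -> smooth_on U (pdx p).
Proof. intros H n. exact (proj1 (proj2 (H (S n)))). Qed.
Lemma smooth_pdy U p : smooth_on U p -> smooth_on U (pdy p).
Proof. intros H n. exact (proj2 (proj2 (H (S n)))). Qed.

Lemma between_abs x u c : Rmin x u <= c <= Rmax x u -> Rabs (c - x) <= Rabs (u - x).
Proof.
  unfold Rmin, Rmax. destruct (Rle_dec x u); intros [H1 H2];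
  unfold Rabs; repeat destruct Rcase_abs; lra.
Qed.

Lemma C1_diff U p x y : open2 U -> C1 U p -> U x y ->
  differentiable_pt_lim p x y (pdx p x y) (pdy p x y).
Proof.
  intros HU [Hd [Hcx [Hcy Hc]]] Hxy eps.
  pose proof (cond_pos eps) as Heps.
  destruct (HU x y Hxy) as [d0 [Hd0 HU0]].
  destruct (Hcx x y Hxy (eps/2)) as [dc [Hdc Hc1]]; [lra|].
  destruct (Hd x y Hxy) as [_ Hy].
  destruct (Hy (eps/2)) as [d2 Hd2]; [lra|].
  pose proof (cond_pos d2) as Hd2p.
  assert (Hdp : 0 < Rmin (Rmin (d0/2) (dc/2)) d2).
  { repeat apply Rmin_pos; lra. }
  exists (mkposreal _ Hdp). simpl. intros u v Hu Hv.
  pose proof (Rmin_l (Rmin (d0/2) (dc/2)) d2). pose proof (Rmin_r (Rmin (d0/2) (dc/2)) d2).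
  pose proof (Rmin_l (d0/2) (dc/2)). pose proof (Rmin_r (d0/2) (dc/2)).
  set (l1 := pdx p x y). set (l2 := pdy p x y).
  assert (Hxi : forall c, Rabs (c - x) <= Rabs (u - x) -> U c v /\ Rabs (pdx p c v - l1) < eps/2).
  { intros c Hc'. pose proof (dist2_le c v x y).
    split. apply HU0. lra. apply Hc1. lra. }
  destruct (MVT_abs (fun t => p t v - l1 * t) (fun t => pdx p t v - l1) x u) as [c [Hc2 Hc3]].
  { intros c Hcb. pose proof (between_abs _ _ _ Hcb) as Hb.
    destruct (Hxi c Hb) as [HUc _].
    destruct (Hd c v HUc) as [Hdc' _].
    replace (pdx p c v - l1) with (pdx p c v - l1 * 1) by ring.
    apply (derivable_pt_lim_minus (fun t => p t v) (fun t => l1 * t)). exact Hdc'.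
    apply (derivable_pt_lim_scal id). apply derivable_pt_lim_id. }
  assert (Hc4 : Rabs (c - x) <= Rabs (u - x)).
  { apply between_abs. exact Hc3. }
  destruct (Hxi c Hc4) as [_ Hc5].
  assert (T1 : Rabs (p u v - p x v - l1 * (u - x)) <= eps / 2 * Rabs (u - x)).
  { replace (p u v - p x v - l1 * (u - x)) with ((p u v - l1 * u) - (p x v - l1 * x)) by ring.
    rewrite Hc2. apply Rmult_le_compat_r. apply Rabs_pos. lra. }
  assert (T2 : Rabs (p x v - p x y - l2 * (v - y)) <= eps / 2 * Rabs (v - y)).
  { destruct (Req_dec v y) as [E|E].
    - subst v. replace (p x y - p x y - l2 * (y - y)) with 0 by ring.
      rewrite Rabs_R0. replace (y - y) with 0 by ring. rewrite Rabs_R0. lra.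
    - assert (Hvy : v - y <> 0) by lra.
      assert (Hvd : Rabs (v - y) < d2) by lra. specialize (Hd2 (v - y) Hvy Hvd).
      replace (y + (v - y)) with v in Hd2 by ring. cbv beta in Hd2.
      replace (p x v - p x y - l2 * (v - y)) with (((p x v - p x y) / (v - y) - l2) * (v - y)) by (field; exact Hvy).
      rewrite Rabs_mult. apply Rmult_le_compat_r. apply Rabs_pos. unfold l2. lra. }
  replace (p u v - p x y - (l1 * (u - x) + l2 * (v - y))) with
    ((p u v - p x v - l1 * (u - x)) + (p x v - p x y - l2 * (v - y))) by ring.
  eapply Rle_trans. apply Rabs_triang.
  pose proof (Rmax_l (Rabs (u - x)) (Rabs (v - y))). pose proof (Rmax_r (Rabs (u - x)) (Rabs (v - y))).
  nra.
Qed.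

Lemma chain U p X Y t0 dX dY : open2 U -> C1 U p -> U (X t0) (Y t0) ->
  derivable_pt_lim X t0 dX -> derivable_pt_lim Y t0 dY ->
  derivable_pt_lim (fun t => p (X t) (Y t)) t0
    (pdx p (X t0) (Y t0) * dX + pdy p (X t0) (Y t0) * dY).
Proof.
  intros HU HC HXY HX HY. apply derivable_pt_lim_comp_2d; auto.
  apply C1_diff with U; auto.
Qed.

Lemma cont_comp U p X Y r t : cont_on2 U p -> U (X r t) (Y r t) ->
  continuity_2d_pt X r t -> continuity_2d_pt Y r t ->
  continuity_2d_pt (fun u v => p (X u v) (Y u v)) r t.
Proof.
  intros Hp HU HX HY eps.
  destruct (Hp _ _ HU eps (cond_pos eps)) as [d [Hd Hd']].
  assert (Hd2 : 0 < d/2) by lra.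
  pose proof (locally_2d_and _ _ _ _ (HX (mkposreal _ Hd2)) (HY (mkposreal _ Hd2))) as Hl.
  eapply locally_2d_impl. 2: exact Hl.
  apply locally_2d_forall. simpl. intros u v [H1 H2].
  apply Hd'. pose proof (dist2_le (X u v) (Y u v) (X r t) (Y r t)). lra.
Qed.

Lemma cont2_snd F r t : continuity_2d_pt F r t -> continuous (F r) t.
Proof.
  intros H. apply continuity_pt_filterlim. apply continuity_pt_locally.
  intros eps. apply (locally_2d_1d_const_x (fun u v => Rabs (F u v - F r t) < eps)). apply H.
Qed.

Lemma cont2_fst F r t : continuity_2d_pt F r t -> continuous (fun u => F u t) r.
Proof.
  intros H. apply continuity_pt_filterlim. apply continuity_pt_locally.
  intros eps. apply (locally_2d_1d_const_y (fun u v => Rabs (F u v - F r t) < eps)). apply H.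
Qed.

Lemma cont2_cos r t : continuity_2d_pt (fun _ v => cos v) r t.
Proof. apply (continuity_1d_2d_pt_comp cos (fun _ v => v)). apply continuity_cos. apply continuity_2d_pt_id2. Qed.
Lemma cont2_sin r t : continuity_2d_pt (fun _ v => sin v) r t.
Proof. apply (continuity_1d_2d_pt_comp sin (fun _ v => v)). apply continuity_sin. apply continuity_2d_pt_id2. Qed.
Lemma cont2_X r t : continuity_2d_pt (fun u v => u * cos v) r t.
Proof. apply continuity_2d_pt_mult. apply continuity_2d_pt_id1. apply cont2_cos. Qed.
Lemma cont2_Y r t : continuity_2d_pt (fun u v => u * sin v) r t.
Proof. apply continuity_2d_pt_mult. apply continuity_2d_pt_id1. apply cont2_sin. Qed.
Lemma cont2_Xc c r t : continuity_2d_pt (fun u v => c + u * cos v) r t.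
Proof. apply continuity_2d_pt_plus. apply continuity_2d_pt_const. apply cont2_X. Qed.
Lemma cont2_Yc c r t : continuity_2d_pt (fun u v => c + u * sin v) r t.
Proof. apply continuity_2d_pt_plus. apply continuity_2d_pt_const. apply cont2_Y. Qed.

Lemma param_deriv (F DF : R -> R -> R) (a b r : R) :
  (forall r t, a < r < b -> derivable_pt_lim (fun u => F u t) r (DF r t)) ->
  (forall r t, a < r < b -> continuity_2d_pt DF r t) ->
  (forall r t, a < r < b -> continuity_2d_pt F r t) ->
  a < r < b ->
  is_derive (fun r => CRInt (F r) 0 (2*PI)) r (CRInt (DF r) 0 (2*PI)).
Proof.
  intros HD HcD HcF Hr.
  assert (HDe : forall u t, a < u < b -> Derive (fun z => F z t) u = DF u t).
  { intros u t Hu. apply is_derive_unique. apply is_derive_Reals. auto. }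
  rewrite (RInt_ext (DF r) (fun t => Derive (fun u => F u t) r)).
  2: { intros t _. rewrite HDe; auto. }
  apply (is_derive_RInt_param F 0 (2*PI) r).
  - apply locally_interval with (a := Finite a) (b := Finite b); simpl; try tauto.
    intros y Hy1 Hy2 t _. exists (DF y t). apply is_derive_Reals. apply HD. lra.
  - intros t _. apply continuity_2d_pt_ext_loc with (f := DF).
    2: apply HcD; auto.
    assert (Hd : 0 < Rmin (r - a) (b - r)) by (apply Rmin_pos; lra).
    exists (mkposreal _ Hd). simpl. intros u v Hu _.
    pose proof (Rmin_l (r-a) (b-r)); pose proof (Rmin_r (r-a) (b-r)).
    rewrite HDe; auto. unfold Rabs in Hu; destruct Rcase_abs in Hu; lra.
  - apply locally_interval with (a := Finite a) (b := Finite b); simpl; try tauto.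
    intros y Hy1 Hy2. apply (ex_RInt_continuous (V:=R_CompleteNormedModule)). intros z _. apply cont2_snd. apply HcF. lra.
Qed.

Lemma ex_RInt_2d F r : (forall t, continuity_2d_pt F r t) -> ex_RInt (F r) 0 (2*PI).
Proof. intros H. apply (ex_RInt_continuous (V:=R_CompleteNormedModule)). intros z _. apply cont2_snd. apply H. Qed.

Lemma deriv_cont (f : R -> R) x l : is_derive f x l -> continuous f x.
Proof. intros H. apply (ex_derive_continuous (K:=R_AbsRing) (V:=R_NormedModule)). exists l. exact H. Qed.

Lemma RInt_scal_R (f : R -> R) a b k : ex_RInt f a b -> CRInt (fun x => k * f x) a b = k * CRInt f a b.
Proof. intros H. exact (RInt_scal (V:=R_CompleteNormedModule) f a b k H). Qed.
Lemma RInt_plus_R (f g : R -> R) a b : ex_RInt f a b -> ex_RInt g a b ->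
  CRInt (fun x => f x + g x) a b = CRInt f a b + CRInt g a b.
Proof. intros H1 H2. exact (RInt_plus (V:=R_CompleteNormedModule) f g a b H1 H2). Qed.
Lemma RInt_const_R a b (c : R) : CRInt (fun _ => c) a b = (b - a) * c.
Proof. exact (RInt_const (V:=R_CompleteNormedModule) a b c). Qed.
Lemma RInt_ext_R (f g : R -> R) a b : (forall x, Rmin a b < x < Rmax a b -> f x = g x) ->
  CRInt f a b = CRInt g a b.
Proof. intros H. exact (RInt_ext (V:=R_CompleteNormedModule) f g a b H). Qed.
Lemma ex_RInt_ext_R (f g : R -> R) a b : (forall x, Rmin a b < x < Rmax a b -> f x = g x) ->
  ex_RInt f a b -> ex_RInt g a b.
Proof. intros H. exact (ex_RInt_ext (V:=R_NormedModule) f g a b H). Qed.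
Lemma is_RInt_unique_R (f : R -> R) a b l : is_RInt f a b l -> CRInt f a b = l.
Proof. intros H. exact (is_RInt_unique (V:=R_CompleteNormedModule) f a b l H). Qed.

Lemma dl_eq f x l l' : derivable_pt_lim f x l -> l = l' -> derivable_pt_lim f x l'.
Proof. intros H ->. exact H. Qed.
Lemma dl_mult f1 f2 x l1 l2 : derivable_pt_lim f1 x l1 -> derivable_pt_lim f2 x l2 ->
  derivable_pt_lim (fun u => f1 u * f2 u) x (l1 * f2 x + f1 x * l2).
Proof. intros. exact (derivable_pt_lim_mult f1 f2 x l1 l2 H H0). Qed.
Lemma dl_plus f1 f2 x l1 l2 : derivable_pt_lim f1 x l1 -> derivable_pt_lim f2 x l2 ->
  derivable_pt_lim (fun u => f1 u + f2 u) x (l1 + l2).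
Proof. intros. exact (derivable_pt_lim_plus f1 f2 x l1 l2 H H0). Qed.
Lemma dl_const c x : derivable_pt_lim (fun _ => c) x 0.
Proof. exact (derivable_pt_lim_const c x). Qed.
Lemma dl_id x : derivable_pt_lim (fun u => u) x 1.
Proof. exact (derivable_pt_lim_id x). Qed.
Lemma dl_scal c f x l : derivable_pt_lim f x l -> derivable_pt_lim (fun u => c * f u) x (c * l).
Proof. intros H. eapply dl_eq. apply (dl_mult (fun _ => c) f). apply dl_const. exact H. ring. Qed.
Lemma dl_cos x : derivable_pt_lim (fun u => cos u) x (- sin x).
Proof. exact (derivable_pt_lim_cos x). Qed.
Lemma dl_sin x : derivable_pt_lim (fun u => sin u) x (cos x).
Proof. exact (derivable_pt_lim_sin x). Qed.

Section Polar.
Variables (U : R -> R -> Prop) (HU : open2 U).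

Lemma dr_polar p x0 y0 r t : C1 U p -> U (x0 + r * cos t) (y0 + r * sin t) ->
  derivable_pt_lim (fun u => p (x0 + u * cos t) (y0 + u * sin t)) r
    (pdx p (x0 + r * cos t) (y0 + r * sin t) * cos t + pdy p (x0 + r * cos t) (y0 + r * sin t) * sin t).
Proof.
  intros Hp HUr.
  apply (chain U p (fun u => x0 + u * cos t) (fun u => y0 + u * sin t) r); auto.
  - eapply dl_eq. apply dl_plus. apply dl_const. apply (dl_mult (fun u => u) (fun _ => cos t)).
    apply dl_id. apply dl_const. ring.
  - eapply dl_eq. apply dl_plus. apply dl_const. apply (dl_mult (fun u => u) (fun _ => sin t)).
    apply dl_id. apply dl_const. ring.
Qed.

Lemma dt_polar p x0 y0 r t : C1 U p -> U (x0 + r * cos t) (y0 + r * sin t) ->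
  derivable_pt_lim (fun v => p (x0 + r * cos v) (y0 + r * sin v)) t
    (pdx p (x0 + r * cos t) (y0 + r * sin t) * (- (r * sin t)) + pdy p (x0 + r * cos t) (y0 + r * sin t) * (r * cos t)).
Proof.
  intros Hp HUr.
  apply (chain U p (fun v => x0 + r * cos v) (fun v => y0 + r * sin v) t); auto.
  - eapply dl_eq. apply dl_plus. apply dl_const. apply (dl_scal r (fun v => cos v)).
    apply dl_cos. ring.
  - eapply dl_eq. apply dl_plus. apply dl_const. apply (dl_scal r (fun v => sin v)).
    apply dl_sin. ring.
Qed.

Lemma c2_polar p x0 y0 r t : cont_on2 U p -> U (x0 + r * cos t) (y0 + r * sin t) ->
  continuity_2d_pt (fun u v => p (x0 + u * cos v) (y0 + u * sin v)) r t.
Proof.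
  intros Hp HUr. apply (cont_comp U p (fun u v => x0 + u * cos v) (fun u v => y0 + u * sin v)); auto.
  apply cont2_Xc. apply cont2_Yc.
Qed.

End Polar.

Section Main.
Variables (U : R -> R -> Prop) (g : R -> R -> R).
Hypothesis HU : open2 U.
Hypothesis Hg : smooth_on U g.

Lemma Hg1 : C1 U g. Proof. apply smooth_C1, Hg. Qed.
Lemma Hgx : C1 U (pdx g). Proof. apply smooth_C1, smooth_pdx, Hg. Qed.
Lemma Hgy : C1 U (pdy g). Proof. apply smooth_C1, smooth_pdy, Hg. Qed.
Lemma HA : C1 U (pdx (pdx g)). Proof. apply smooth_C1, smooth_pdx, smooth_pdx, Hg. Qed.
Lemma HB : C1 U (pdy (pdy g)). Proof. apply smooth_C1, smooth_pdy, smooth_pdy, Hg. Qed.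

Lemma cont_of_C1 p : C1 U p -> cont_on2 U p.
Proof. intros [_ [_ [_ H]]]. exact H. Qed.
Lemma contx_of_C1 p : C1 U p -> cont_on2 U (pdx p).
Proof. intros [_ [H _]]. exact H. Qed.
Lemma conty_of_C1 p : C1 U p -> cont_on2 U (pdy p).
Proof. intros [_ [_ [H _]]]. exact H. Qed.

Lemma omega_cont2 x y : U x y -> continuity_2d_pt (omega_coef g) x y.
Proof.
  intros Hxy. unfold omega_coef. apply continuity_2d_pt_mult. apply continuity_2d_pt_const.
  apply continuity_2d_pt_plus.
  - apply (cont_comp U (pdx (pdx g)) (fun u v => u) (fun u v => v)); auto.
    apply cont_of_C1, HA. apply continuity_2d_pt_id1. apply continuity_2d_pt_id2.
  - apply (cont_comp U (pdy (pdy g)) (fun u v => u) (fun u v => v)); auto.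
    apply cont_of_C1, HB. apply continuity_2d_pt_id1. apply continuity_2d_pt_id2.
Qed.

Lemma omega_polar_cont x0 y0 a b :
  (forall r t, a < r < b -> U (x0 + r * cos t) (y0 + r * sin t)) ->
  forall r, a < r < b ->
  continuous (fun r => CRInt (fun th => omega_coef g (x0 + r * cos th) (y0 + r * sin th)) 0 (2*PI)) r.
Proof.
  intros Hann r Hr. eapply deriv_cont.
  apply (param_deriv (fun r th => omega_coef g (x0 + r * cos th) (y0 + r * sin th))
    (fun r th => / (2 * PI) * ((pdx (pdx (pdx g)) (x0 + r * cos th) (y0 + r * sin th) * cos th +
                               pdy (pdx (pdx g)) (x0 + r * cos th) (y0 + r * sin th) * sin th) +
                              (pdx (pdy (pdy g)) (x0 + r * cos th) (y0 + r * sin th) * cos th +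
                               pdy (pdy (pdy g)) (x0 + r * cos th) (y0 + r * sin th) * sin th))) a b r).
  - intros u t Hu. unfold omega_coef. apply dl_scal. apply dl_plus.
    apply (dr_polar U HU). apply HA. auto. apply (dr_polar U HU). apply HB. auto.
  - intros u t Hu. apply continuity_2d_pt_mult. apply continuity_2d_pt_const.
    repeat apply continuity_2d_pt_plus; apply continuity_2d_pt_mult;
      try apply cont2_cos; try apply cont2_sin; apply (c2_polar U);
      try (apply contx_of_C1; first [apply HA | apply HB]);
      try (apply conty_of_C1; first [apply HA | apply HB]); auto.
  - intros u t Hu. unfold omega_coef. apply continuity_2d_pt_mult. apply continuity_2d_pt_const.
    apply continuity_2d_pt_plus; apply (c2_polar U);
      try (apply cont_of_C1; first [apply HA | apply HB]); auto.
  - exact Hr.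
Qed.


Lemma omega_polar_2d x0 y0 r t : U (x0 + r * cos t) (y0 + r * sin t) ->
  continuity_2d_pt (fun u v => omega_coef g (x0 + u * cos v) (y0 + u * sin v)) r t.
Proof.
  intros Hr. unfold omega_coef. apply continuity_2d_pt_mult. apply continuity_2d_pt_const.
  apply continuity_2d_pt_plus; apply (c2_polar U);
    try (apply cont_of_C1; first [apply HA | apply HB]); auto.
Qed.

Lemma cont_rmul (W : R -> R) r : continuous W r -> continuous (fun r => r * W r) r.
Proof.
  intros H. apply (continuous_mult (U:=R_UniformSpace) (K:=R_AbsRing) (fun r => r) W).
  apply continuous_id. exact H.
Qed.

Lemma abs_rc r t : Rabs (r * cos t) <= Rabs r.
Proof. rewrite Rabs_mult. pose proof (COS_bound t). pose proof (Rabs_pos r).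
  assert (Rabs (cos t) <= 1) by (apply Rabs_le; lra). nra. Qed.
Lemma abs_rs r t : Rabs (r * sin t) <= Rabs r.
Proof. rewrite Rabs_mult. pose proof (SIN_bound t). pose proof (Rabs_pos r).
  assert (Rabs (sin t) <= 1) by (apply Rabs_le; lra). nra. Qed.

Lemma omega_nonneg (Hsp : semipositive U g) x0 y0 : U x0 y0 -> 0 <= omega_coef g x0 y0.
Proof.
  intros H0. destruct (Rle_lt_dec 0 (omega_coef g x0 y0)) as [ok|Hneg]; [exact ok|exfalso].
  set (w0 := omega_coef g x0 y0) in *.
  destruct (HU x0 y0 H0) as [d0 [Hd0 HU0]].
  assert (He : 0 < -w0/2) by lra.
  destruct (omega_cont2 x0 y0 H0 (mkposreal _ He)) as [dl Hdl]. simpl in Hdl.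
  pose proof (cond_pos dl) as Hdlp.
  set (d := Rmin d0 dl / 2).
  assert (Hd : 0 < d) by (unfold d; pose proof (Rmin_pos d0 dl Hd0 Hdlp); lra).
  pose proof (Rmin_l d0 dl); pose proof (Rmin_r d0 dl).
  assert (Hann : forall r t, -d < r < d -> U (x0 + r * cos t) (y0 + r * sin t) /\
                   omega_coef g (x0 + r * cos t) (y0 + r * sin t) < w0/2).
  { intros r t Hr. assert (Hr' : Rabs r < d) by (apply Rabs_def1; lra).
    pose proof (abs_rc r t); pose proof (abs_rs r t).
    split.
    - apply HU0. eapply Rle_lt_trans. apply dist2_le.
      replace (x0 + r * cos t - x0) with (r * cos t) by ring.
      replace (y0 + r * sin t - y0) with (r * sin t) by ring. unfold d in *. lra.
    - assert (Hw : Rabs (omega_coef g (x0 + r * cos t) (y0 + r * sin t) - w0) < - w0 / 2).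
      { apply Hdl; [replace (x0 + r * cos t - x0) with (r * cos t) by ring
                   |replace (y0 + r * sin t - y0) with (r * sin t) by ring]; unfold d in *; lra. }
      apply Rabs_def2 in Hw. lra. }
  set (t := d / 2). assert (Ht : 0 < t) by (unfold t; lra).
  specialize (Hsp t (fun x y => x0 + x) (fun x y => y0 + y) Ht).
  assert (Hpol : 0 <= polar_int (fun x y => omega_coef g (x0 + x) (y0 + y)) 0 t).
  { replace (fun x y => omega_coef g (x0 + x) (y0 + y)) with
      (pullback_coef (omega_coef g) (fun x y => x0 + x) (fun x y => y0 + y)).
    2: { apply functional_extensionality; intro x; apply functional_extensionality; intro y.
         unfold pullback_coef, pdx, pdy. cbv beta.
         rewrite (deriv1_eq (fun t => x0 + t) x 1), (deriv1_eq (fun t => y0 + t) y 1),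
                 (deriv1_eq (fun _ => x0 + x) y 0), (deriv1_eq (fun _ => y0 + y) x 0).
         ring. apply dl_const. apply dl_const.
         eapply dl_eq. apply dl_plus. apply dl_const. apply dl_id. ring.
         eapply dl_eq. apply dl_plus. apply dl_const. apply dl_id. ring. }
    apply Hsp.
    - intros x y _ e He'. exists e. split; [exact He'|]. intros x' y' _ Hd'.
      unfold dist2 in *. replace (x0 + x' - (x0 + x)) with (x' - x) by ring.
      replace (y0 + y' - (y0 + y)) with (y' - y) by ring. exact Hd'.
    - intros x y _. exists 1, 0. intros e He'. exists 1. split; [lra|]. intros h k _.
      replace (x0 + (x + h) - (x0 + x) - (1 * h - 0 * k)) with 0 by ring.
      replace (y0 + (y + k) - (y0 + y) - (0 * h + 1 * k)) with 0 by ring.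
      rewrite dist2_self. apply Rmult_le_pos. lra. apply dist2_pos.
    - intros x y Hxy. apply HU0. unfold dist2.
      replace (x0 + x - x0) with x by ring. replace (y0 + y - y0) with y by ring.
      apply Rle_lt_trans with t. rewrite <- (sqrt_pow2 t) by lra. apply sqrt_le_1_alt. exact Hxy.
      unfold t, d in *. lra. }
  set (Wt := fun r => CRInt (fun th => omega_coef g (x0 + r * cos th) (y0 + r * sin th)) 0 (2*PI)).
  assert (HWc : forall r, -d < r < d -> continuous Wt r).
  { intros r Hr. apply (omega_polar_cont x0 y0 (-d) d). intros; apply Hann; auto. exact Hr. }
  assert (Hex : ex_RInt (fun r => r * Wt r) 0 t).
  { apply (ex_RInt_continuous (V:=R_CompleteNormedModule)). intros z Hz.
    rewrite Rmin_left in Hz by lra. rewrite Rmax_right in Hz by lra.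
    apply cont_rmul. apply HWc. unfold t in *; lra. }
  assert (Heq : polar_int (fun x y => omega_coef g (x0 + x) (y0 + y)) 0 t = CRInt (fun r => r * Wt r) 0 t).
  { unfold polar_int.
    assert (Hin : forall r, Rmin 0 t < r < Rmax 0 t ->
       r * Wt r = r * Defs.RInt (fun th => omega_coef g (x0 + r * cos th) (y0 + r * sin th)) 0 (2 * PI)).
    { intros r Hr. rewrite Rmin_left in Hr by lra. rewrite Rmax_right in Hr by lra.
      rewrite Defs_RInt_eq. reflexivity.
      apply ex_RInt_2d with (F := fun u v => omega_coef g (x0 + u * cos v) (y0 + u * sin v)).
      intros th. apply omega_polar_2d. apply Hann. unfold t in *; lra. }
    rewrite Defs_RInt_eq.
    - symmetry. apply RInt_ext. exact Hin.
    - eapply ex_RInt_ext. exact Hin. exact Hex. }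
  assert (Hlt : CRInt (fun r => r * Wt r) 0 t < CRInt (fun _ => 0) 0 t).
  { apply RInt_lt. exact Ht.
    - intros; apply continuous_const.
    - intros z Hz. apply cont_rmul. apply HWc. unfold t in *; lra.
    - intros r Hr. assert (HWr : Wt r <= CRInt (fun _ => w0/2) 0 (2*PI)).
      { apply RInt_le. pose proof PI_RGT_0; lra.
        apply ex_RInt_2d with (F := fun u v => omega_coef g (x0 + u * cos v) (y0 + u * sin v)).
        intros th. apply omega_polar_2d. apply Hann. unfold t in *; lra.
        apply ex_RInt_const.
        intros th _. left. apply Hann. unfold t in *; lra. }
      rewrite RInt_const in HWr. change (scal (2 * PI - 0) (w0 / 2)) with ((2*PI - 0) * (w0/2)) in HWr.
      pose proof PI_RGT_0. assert (Hn : (2 * PI - 0) * (w0 / 2) < 0) by nra. generalize dependent (Wt r). intros w Hw. nra. }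
  rewrite RInt_const in Hlt. change (scal (t - 0) 0) with ((t - 0) * 0) in Hlt.
  lra.
Qed.

End Main.

Ltac c2 := repeat first [ apply continuity_2d_pt_plus | apply continuity_2d_pt_mult
  | apply continuity_2d_pt_opp | apply continuity_2d_pt_minus | apply continuity_2d_pt_const
  | apply cont2_cos | apply cont2_sin | apply continuity_2d_pt_id1 ].

Section Ann.
Variables (U : R -> R -> Prop) (g : R -> R -> R).
Hypothesis HU : open2 U.
Hypothesis Hg : smooth_on U g.
Variable s1 : R.
Hypothesis Hann : forall r t, 0 < r < s1 -> U (r * cos t) (r * sin t).

Lemma dr0 p r t : C1 U p -> U (r * cos t) (r * sin t) ->
  derivable_pt_lim (fun u => p (u * cos t) (u * sin t)) r
    (pdx p (r * cos t) (r * sin t) * cos t + pdy p (r * cos t) (r * sin t) * sin t).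
Proof.
  intros Hp H. pose proof (dr_polar U HU p 0 0 r t Hp) as K.
  rewrite !Rplus_0_l in K. specialize (K H).
  replace (fun u => p (0 + u * cos t) (0 + u * sin t)) with (fun u => p (u * cos t) (u * sin t)) in K.
  exact K. apply functional_extensionality; intro u. rewrite !Rplus_0_l. reflexivity.
Qed.

Lemma dt0 p r t : C1 U p -> U (r * cos t) (r * sin t) ->
  derivable_pt_lim (fun v => p (r * cos v) (r * sin v)) t
    (pdx p (r * cos t) (r * sin t) * (- (r * sin t)) + pdy p (r * cos t) (r * sin t) * (r * cos t)).
Proof.
  intros Hp H. pose proof (dt_polar U HU p 0 0 r t Hp) as K.
  rewrite !Rplus_0_l in K. specialize (K H).
  replace (fun v => p (0 + r * cos v) (0 + r * sin v)) with (fun v => p (r * cos v) (r * sin v)) in K.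
  exact K. apply functional_extensionality; intro u. rewrite !Rplus_0_l. reflexivity.
Qed.

Lemma c20 p r t : cont_on2 U p -> U (r * cos t) (r * sin t) ->
  continuity_2d_pt (fun u v => p (u * cos v) (u * sin v)) r t.
Proof.
  intros Hp H. apply (cont_comp U p (fun u v => u * cos v) (fun u v => u * sin v)); auto.
  apply cont2_X. apply cont2_Y.
Qed.

Definition Fg r := CRInt (fun th => g (r * cos th) (r * sin th)) 0 (2*PI).
Definition Gd r := CRInt (fun th => pdx g (r * cos th) (r * sin th) * cos th + pdy g (r * cos th) (r * sin th) * sin th) 0 (2*PI).
Definition phi r := CRInt (fun th => / (2*PI) * (r * (pdx g (r * cos th) (r * sin th) * cos th + pdy g (r * cos th) (r * sin th) * sin th))) 0 (2*PI).
Definition W r := CRInt (fun th => omega_coef g (r * cos th) (r * sin th)) 0 (2*PI).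

Lemma PIpos : 0 < PI. Proof. exact PI_RGT_0. Qed.

Ltac cfacts := first [ apply (cont_of_C1 U), Hg1, Hg | apply (cont_of_C1 U), Hgx, Hg | apply (cont_of_C1 U), Hgy, Hg
  | apply (contx_of_C1 U), Hg1, Hg | apply (conty_of_C1 U), Hg1, Hg
  | apply (contx_of_C1 U), Hgx, Hg | apply (conty_of_C1 U), Hgx, Hg
  | apply (contx_of_C1 U), Hgy, Hg | apply (conty_of_C1 U), Hgy, Hg
  | apply (cont_of_C1 U), HA, Hg | apply (cont_of_C1 U), HB, Hg ].

Ltac c2all := c2; try (apply c20; [cfacts | apply Hann; lra]).

Lemma Fg_deriv r : 0 < r < s1 -> is_derive Fg r (Gd r).
Proof.
  intros Hr. unfold Fg, Gd.
  apply (param_deriv (fun r th => g (r * cos th) (r * sin th))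
     (fun r th => pdx g (r * cos th) (r * sin th) * cos th + pdy g (r * cos th) (r * sin th) * sin th) 0 s1 r); auto.
  - intros u t Hu. apply dr0. apply Hg1, Hg. apply Hann; auto.
  - intros u t Hu. c2all.
  - intros u t Hu. c2all.
Qed.

Lemma phi_Gd r : 0 < r < s1 -> phi r = / (2*PI) * r * Gd r.
Proof.
  intros Hr. unfold phi, Gd.
  rewrite (RInt_ext_R _ (fun th => (/ (2*PI) * r) * (pdx g (r * cos th) (r * sin th) * cos th + pdy g (r * cos th) (r * sin th) * sin th))).
  2: { intros; ring. }
  rewrite RInt_scal_R. reflexivity.
  apply ex_RInt_2d with (F := fun r th => pdx g (r * cos th) (r * sin th) * cos th + pdy g (r * cos th) (r * sin th) * sin th).
  intros t. c2all.
Qed.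


Definition DF2 r th := / (2*PI) * ((pdx g (r * cos th) (r * sin th) * cos th + pdy g (r * cos th) (r * sin th) * sin th)
   + r * ((pdx (pdx g) (r * cos th) (r * sin th) * cos th + pdy (pdx g) (r * cos th) (r * sin th) * sin th) * cos th
        + (pdx (pdy g) (r * cos th) (r * sin th) * cos th + pdy (pdy g) (r * cos th) (r * sin th) * sin th) * sin th)).
Definition K2 r th := (-1) * (pdx g (r * cos th) (r * sin th) * sin th) + pdy g (r * cos th) (r * sin th) * cos th.
Definition KD2 r th := (-1) * ((pdx (pdx g) (r * cos th) (r * sin th) * (- (r * sin th)) + pdy (pdx g) (r * cos th) (r * sin th) * (r * cos th)) * sin th
      + pdx g (r * cos th) (r * sin th) * cos th)
   + ((pdx (pdy g) (r * cos th) (r * sin th) * (- (r * sin th)) + pdy (pdy g) (r * cos th) (r * sin th) * (r * cos th)) * cos th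
      + pdy g (r * cos th) (r * sin th) * (- sin th)).

Lemma KD2_cont r th : 0 < r < s1 -> continuity_2d_pt KD2 r th.
Proof. intros Hr. unfold KD2. c2all. Qed.
Lemma DF2_cont r th : 0 < r < s1 -> continuity_2d_pt DF2 r th.
Proof. intros Hr. unfold DF2. c2all. Qed.
Lemma om2_cont r th : 0 < r < s1 -> continuity_2d_pt (fun u v => omega_coef g (u * cos v) (u * sin v)) r th.
Proof. intros Hr. unfold omega_coef. c2all. Qed.

Lemma KD_int r : 0 < r < s1 -> CRInt (KD2 r) 0 (2*PI) = 0.
Proof.
  intros Hr.
  assert (Hz : K2 r (2*PI) - K2 r 0 = 0).
  { unfold K2. rewrite cos_2PI, sin_2PI, cos_0, sin_0. ring. }
  assert (HR : is_RInt (KD2 r) 0 (2*PI) (minus (K2 r (2*PI)) (K2 r 0))).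
  { apply (is_RInt_derive (V:=R_CompleteNormedModule) (K2 r) (KD2 r)).
  - intros th _. apply is_derive_Reals. unfold K2, KD2.
    eapply dl_eq. apply dl_plus. apply dl_scal. apply dl_mult.
    apply dt0. apply Hgx, Hg. apply Hann; auto. apply dl_sin.
    apply dl_mult. apply dt0. apply Hgy, Hg. apply Hann; auto.
    apply dl_cos. cbv beta; ring.
  - intros th _. apply cont2_snd. apply KD2_cont. auto. }
  change (minus (K2 r (2*PI)) (K2 r 0)) with (K2 r (2*PI) - K2 r 0) in HR.
  rewrite Hz in HR. apply is_RInt_unique_R in HR. exact HR.
Qed.

Lemma phi_deriv r : 0 < r < s1 -> is_derive phi r (r * W r).
Proof.
  intros Hr.
  assert (HD : is_derive phi r (CRInt (DF2 r) 0 (2*PI))).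
  { unfold phi.
    apply (param_deriv (fun r th => / (2*PI) * (r * (pdx g (r * cos th) (r * sin th) * cos th + pdy g (r * cos th) (r * sin th) * sin th)))
      DF2 0 s1 r); auto.
    - intros u t Hu. unfold DF2. eapply dl_eq. apply dl_scal. apply (dl_mult (fun u => u)).
      apply dl_id. apply dl_plus; apply dl_mult; try apply dl_const; apply dr0;
        try apply Hann; auto; first [apply Hgx, Hg | apply Hgy, Hg].
      cbv beta; ring.
    - intros u t Hu. apply DF2_cont. auto.
    - intros u t Hu. c2all. }
  replace (r * W r) with (CRInt (DF2 r) 0 (2*PI)). exact HD.
  assert (Hom : ex_RInt (fun th => omega_coef g (r * cos th) (r * sin th)) 0 (2*PI)).
  { apply (ex_RInt_2d (fun u v => omega_coef g (u * cos v) (u * sin v))). intros; apply om2_cont; auto. }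
  assert (Hkd : ex_RInt (KD2 r) 0 (2*PI)).
  { apply ex_RInt_2d. intros; apply KD2_cont; auto. }
  rewrite (RInt_ext_R _ (fun th => r * omega_coef g (r * cos th) (r * sin th) + (- / (2*PI)) * KD2 r th)).
  - rewrite RInt_plus_R. rewrite !RInt_scal_R; auto. rewrite KD_int; auto. unfold W. match goal with |- ?a = ?b => change (@eq R a b) end; ring.
    apply (ex_RInt_ext_R (fun th => r * omega_coef g (r * cos th) (r * sin th))). intros; reflexivity.
    apply (ex_RInt_scal (V:=R_NormedModule) _ _ _ r Hom).
    apply (ex_RInt_scal (V:=R_NormedModule) _ _ _ (- / (2*PI)) Hkd).
  - intros th _. unfold DF2, KD2, omega_coef.
    pose proof (sin2_cos2 th) as E. unfold Rsqr in E.
    match goal with |- _ = ?R => transitivity (R + / (2*PI) * r * (pdx (pdx g) (r*cos th) (r*sin th) + pdy (pdy g) (r*cos th) (r*sin th)) * (sin th * sin th + cos th * cos th - 1)) end.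
    ring. rewrite E. ring.
Qed.

Lemma W_cont r : 0 < r < s1 -> continuous W r.
Proof.
  intros Hr.
  assert (E : W = fun r => CRInt (fun th => omega_coef g (0 + r*cos th) (0 + r * sin th)) 0 (2*PI)).
  { apply functional_extensionality; intro u. unfold W. f_equal.
    apply functional_extensionality; intro v. rewrite !Rplus_0_l. reflexivity. }
  rewrite E. apply (omega_polar_cont U g HU Hg 0 0 0 s1); auto.
  intros; rewrite !Rplus_0_l; auto.
Qed.

Lemma polar_phi e t : 0 < e -> e <= t -> t < s1 -> polar_int (omega_coef g) e t = phi t - phi e.
Proof.
  intros He Het Ht.
  assert (HR : is_RInt (fun r => r * W r) e t (minus (phi t) (phi e))).
  { apply (is_RInt_derive (V:=R_CompleteNormedModule)).
    - intros x Hx. rewrite Rmin_left in Hx by lra. rewrite Rmax_right in Hx by lra.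
      apply phi_deriv. lra.
    - intros x Hx. rewrite Rmin_left in Hx by lra. rewrite Rmax_right in Hx by lra.
      apply cont_rmul. apply W_cont. lra. }
  change (minus (phi t) (phi e)) with (phi t - phi e) in HR.
  unfold polar_int.
  assert (Hin : forall r, Rmin e t < r < Rmax e t ->
       r * W r = r * Defs.RInt (fun th => omega_coef g (r * cos th) (r * sin th)) 0 (2 * PI)).
  { intros r Hr. rewrite Rmin_left in Hr by lra. rewrite Rmax_right in Hr by lra.
    rewrite Defs_RInt_eq. reflexivity.
    apply (ex_RInt_2d (fun u v => omega_coef g (u * cos v) (u * sin v))). intros; apply om2_cont; lra. }
  rewrite Defs_RInt_eq.
  - rewrite <- (RInt_ext_R _ _ _ _ Hin). apply is_RInt_unique_R. exact HR.
  - eapply ex_RInt_ext_R. exact Hin. eexists; exact HR.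
Qed.

Lemma eta_fst r : 0 < r < s1 -> fst (eta_circ g r) = phi r.
Proof.
  intros Hr. unfold eta_circ. cbn [fst].
  replace (fun th => fst (eta_at g (r * cos th) (r * sin th) (- r * sin th) (r * cos th)))
    with (fun th => / (2*PI) * (r * (pdx g (r * cos th) (r * sin th) * cos th + pdy g (r * cos th) (r * sin th) * sin th))).
  2: { apply functional_extensionality; intro th. unfold eta_at, Cmul. simpl.
       pose proof PIpos. field. lra. }
  apply Defs_RInt_eq.
  apply (ex_RInt_2d (fun r th => / (2*PI) * (r * (pdx g (r * cos th) (r * sin th) * cos th + pdy g (r * cos th) (r * sin th) * sin th)))).
  intros; c2all.
Qed.

Lemma eta_snd r : 0 < r < s1 -> snd (eta_circ g r) = 0.
Proof.
  intros Hr. unfold eta_circ. cbn [snd].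
  set (D := fun th => / (2*PI) * (pdx g (r * cos th) (r * sin th) * (- (r * sin th)) + pdy g (r * cos th) (r * sin th) * (r * cos th))).
  replace (fun th => snd (eta_at g (r * cos th) (r * sin th) (- r * sin th) (r * cos th))) with D.
  2: { apply functional_extensionality; intro th. unfold D, eta_at, Cmul. simpl.
       pose proof PIpos. field. lra. }
  assert (HR : is_RInt D 0 (2*PI) (minus (/ (2*PI) * g (r * cos (2*PI)) (r * sin (2*PI))) (/ (2*PI) * g (r * cos 0) (r * sin 0)))).
  { apply (is_RInt_derive (V:=R_CompleteNormedModule) (fun th => / (2*PI) * g (r * cos th) (r * sin th))).
    - intros th _. apply is_derive_Reals. unfold D. apply dl_scal. apply dt0. apply Hg1, Hg. apply Hann; auto.
    - intros th _. unfold D.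
      apply (cont2_snd (fun r th => / (2*PI) * (pdx g (r * cos th) (r * sin th) * (- (r * sin th)) + pdy g (r * cos th) (r * sin th) * (r * cos th)))).
      c2all. }
  change (minus (/ (2*PI) * g (r * cos (2*PI)) (r * sin (2*PI))) (/ (2*PI) * g (r * cos 0) (r * sin 0)))
    with (/ (2*PI) * g (r * cos (2*PI)) (r * sin (2*PI)) - / (2*PI) * g (r * cos 0) (r * sin 0)) in HR.
  rewrite cos_2PI, sin_2PI, cos_0, sin_0 in HR.
  rewrite Defs_RInt_eq. apply is_RInt_unique_R in HR. rewrite HR. ring.
  eexists; exact HR.
Qed.

Lemma W_nonneg (Hpos : forall x y, U x y -> 0 <= omega_coef g x y) r : 0 < r < s1 -> 0 <= W r.
Proof.
  intros Hr. unfold W. apply RInt_ge_0. pose proof PIpos; lra.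
  apply (ex_RInt_2d (fun u v => omega_coef g (u * cos v) (u * sin v))). intros; apply om2_cont; auto.
  intros th _. apply Hpos. apply Hann. auto.
Qed.

End Ann.

Lemma trig_reduce th : exists th', 0 <= th' <= 2 * PI /\ cos th' = cos th /\ sin th' = sin th.
Proof.
  pose proof PI_RGT_0 as HPI.
  set (x := th / (2 * PI)). destruct (archimed x) as [H1 H2].
  set (k := (up x - 1)%Z).
  assert (Hk : IZR k = IZR (up x) - 1) by (unfold k; rewrite minus_IZR; reflexivity).
  exists (th - 2 * IZR k * PI). split.
  - assert (E : th = x * (2 * PI)) by (unfold x; field; lra).
    rewrite Hk. split; nra.
  - destruct (Z_le_gt_dec 0 k) as [Hk0|Hk0].
    + assert (E : IZR k = INR (Z.to_nat k)) by (rewrite INR_IZR_INZ, Z2Nat.id; auto).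
      rewrite E. rewrite <- (cos_period (th - 2 * INR (Z.to_nat k) * PI) (Z.to_nat k)).
      rewrite <- (sin_period (th - 2 * INR (Z.to_nat k) * PI) (Z.to_nat k)).
      replace (th - 2 * INR (Z.to_nat k) * PI + 2 * INR (Z.to_nat k) * PI) with th by ring. auto.
    + assert (E : IZR k = - INR (Z.to_nat (- k))).
      { rewrite INR_IZR_INZ, Z2Nat.id by lia. rewrite opp_IZR. ring. }
      rewrite E. replace (th - 2 * - INR (Z.to_nat (- k)) * PI) with (th + 2 * INR (Z.to_nat (- k)) * PI) by ring.
      rewrite cos_period, sin_period. auto.
Qed.

Lemma cos_lip a b : Rabs (cos a - cos b) <= Rabs (a - b).
Proof.
  destruct (MVT_abs cos (fun x => - sin x) b a) as [c [Hc _]].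
  { intros; apply derivable_pt_lim_cos. }
  rewrite Hc. pose proof (SIN_bound c). assert (Rabs (- sin c) <= 1) by (apply Rabs_le; lra).
  pose proof (Rabs_pos (a - b)). nra.
Qed.
Lemma sin_lip a b : Rabs (sin a - sin b) <= Rabs (a - b).
Proof.
  destruct (MVT_abs sin (fun x => cos x) b a) as [c [Hc _]].
  { intros; apply derivable_pt_lim_sin. }
  rewrite Hc. pose proof (COS_bound c). assert (Rabs (cos c) <= 1) by (apply Rabs_le; lra).
  pose proof (Rabs_pos (a - b)). nra.
Qed.

Lemma annulus (U : R -> R -> Prop) s : open2 U -> 0 < s <= 1 ->
  (forall x y, 0 < x ^ 2 + y ^ 2 <= s ^ 2 -> U x y) ->
  exists s1, s < s1 /\ forall r t, 0 < r < s1 -> U (r * cos t) (r * sin t).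
Proof.
  intros HU Hs Hdisk.
  assert (Hpol : forall r t, 0 < r <= s -> U (r * cos t) (r * sin t)).
  { intros r t Hr. apply Hdisk.
    replace ((r * cos t) ^ 2 + (r * sin t) ^ 2) with (r ^ 2 * (sin t ^ 2 + cos t ^ 2)) by ring.
    pose proof (sin2_cos2 t) as E. unfold Rsqr in E. simpl. rewrite !Rmult_1_r. rewrite E. nra. }
  assert (Hex : forall th, exists d, 0 < d /\ forall x' y', dist2 x' y' (s * cos th) (s * sin th) < d -> U x' y').
  { intros th. apply HU. apply Hpol. lra. }
  set (dd := fun th => proj1_sig (constructive_indefinite_description _ (Hex th))).
  assert (Hdd : forall th, 0 < dd th /\ forall x' y', dist2 x' y' (s * cos th) (s * sin th) < dd th -> U x' y').
  { intros th. unfold dd. destruct (constructive_indefinite_description _ (Hex th)). simpl. exact a. }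
  assert (Hpos : forall th, 0 < dd th / 4) by (intros th; destruct (Hdd th); lra).
  destruct (compactness_value_1d 0 (2 * PI) (fun th => mkposreal _ (Hpos th))) as [d Hd].
  pose proof (cond_pos d) as Hdp.
  exists (s + d). split. lra.
  intros r t Hr.
  destruct (Rle_lt_dec r s) as [Hrs|Hrs]. apply Hpol; lra.
  destruct (trig_reduce t) as [t' [Ht' [Ec Es]]]. rewrite <- Ec, <- Es.
  specialize (Hd t' Ht'). simpl in Hd.
  apply NNPP. intros Hn. apply Hd. intros [u [Hu [Hu1 Hu2]]]. apply Hn.
  destruct (Hdd u) as [Hdu HUu]. apply HUu.
  eapply Rle_lt_trans. apply dist2_le.
  assert (A1 : Rabs (r * cos t' - s * cos u) <= Rabs (r - s) + Rabs (t' - u)).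
  { replace (r * cos t' - s * cos u) with ((r - s) * cos t' + s * (cos t' - cos u)) by ring.
    eapply Rle_trans. apply Rabs_triang. rewrite !Rabs_mult.
    pose proof (cos_lip t' u). pose proof (COS_bound t').
    assert (Rabs (cos t') <= 1) by (apply Rabs_le; lra).
    rewrite (Rabs_right s) by lra. pose proof (Rabs_pos (r - s)). pose proof (Rabs_pos (cos t' - cos u)). nra. }
  assert (A2 : Rabs (r * sin t' - s * sin u) <= Rabs (r - s) + Rabs (t' - u)).
  { replace (r * sin t' - s * sin u) with ((r - s) * sin t' + s * (sin t' - sin u)) by ring.
    eapply Rle_trans. apply Rabs_triang. rewrite !Rabs_mult.
    pose proof (sin_lip t' u). pose proof (SIN_bound t').
    assert (Rabs (sin t') <= 1) by (apply Rabs_le; lra).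
    rewrite (Rabs_right s) by lra. pose proof (Rabs_pos (r - s)). pose proof (Rabs_pos (sin t' - sin u)). nra. }
  rewrite (Rabs_right (r - s)) in A1, A2 by lra. lra.
Qed.

Lemma subpoly_contra mu eps C t1 : subpolynomial mu -> 0 < eps -> 0 < t1 ->
  ~ (forall t, 0 < t <= t1 -> eps * (- ln t) <= ln (mu (/ t)) + C).
Proof.
  intros [Hmp Hgr] He Ht1 H.
  destruct (Hgr (eps/2) ltac:(lra) 1 ltac:(lra)) as [X HX].
  set (x := Rmax (Rmax (X + 1) (/ t1)) (exp (2 * Rabs C / eps + 1))).
  assert (Hx1 : X + 1 <= x) by (unfold x; eapply Rle_trans; [apply Rmax_l|apply Rmax_l]).
  assert (Hx2 : / t1 <= x) by (unfold x; eapply Rle_trans; [apply Rmax_r|apply Rmax_l]).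
  assert (Hx3 : exp (2 * Rabs C / eps + 1) <= x) by (unfold x; apply Rmax_r).
  pose proof (exp_pos (2 * Rabs C / eps + 1)).
  assert (Hxp : 0 < x) by lra.
  specialize (HX x Hxp ltac:(lra)).
  pose proof (Hmp x Hxp) as Hmx.
  assert (Hrp : 0 < Rpower x (eps/2)) by (unfold Rpower; apply exp_pos).
  rewrite Rabs_right in HX.
  2: { apply Rle_ge. unfold Rdiv. apply Rmult_le_pos; [lra|]. left; apply Rinv_0_lt_compat; lra. }
  assert (Hm : mu x < Rpower x (eps/2)).
  { apply Rmult_lt_compat_r with (r := Rpower x (eps/2)) in HX; auto.
    unfold Rdiv in HX. rewrite Rmult_assoc, Rinv_l, Rmult_1_r, Rmult_1_l in HX; lra. }
  assert (Hl : ln (mu x) < eps / 2 * ln x).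
  { apply ln_increasing in Hm; auto. unfold Rpower in Hm. rewrite ln_exp in Hm. exact Hm. }
  assert (Hlx : 2 * Rabs C / eps + 1 <= ln x).
  { rewrite <- (ln_exp (2 * Rabs C / eps + 1)). apply ln_le; auto. }
  assert (Ht : 0 < / x <= t1).
  { split. apply Rinv_0_lt_compat; lra.
    rewrite <- (Rinv_inv t1). apply Rinv_le_contravar. apply Rinv_0_lt_compat; lra. exact Hx2. }
  specialize (H (/ x) Ht). rewrite Rinv_inv in H. rewrite ln_Rinv in H by lra.
  replace (- - ln x) with (ln x) in H by ring.
  assert (HC : C <= Rabs C) by apply Rle_abs.
  assert (HH : eps / 2 * ln x >= eps / 2 * (2 * Rabs C / eps + 1)) by (apply Rle_ge, Rmult_le_compat_l; lra).
  replace (eps / 2 * (2 * Rabs C / eps + 1)) with (Rabs C + eps / 2) in HH by (field; lra).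
  lra.
Qed.

Lemma mono_G (G G' : R -> R) a b : a <= b ->
  (forall c, a <= c <= b -> derivable_pt_lim G c (G' c)) ->
  (forall c, a < c < b -> 0 <= G' c) -> G a <= G b.
Proof.
  intros Hab HD Hp. destruct (Req_dec a b) as [->|Hne]. lra.
  destruct (MVT_cor2 G G' a b ltac:(lra) HD) as [c [Hc Hc2]].
  pose proof (Hp c Hc2). nra.
Qed.

Lemma asymp (phi F : R -> R) s s1 a mu : 0 < s < s1 -> subpolynomial mu ->
  (forall r, 0 < r < s1 -> derivable_pt_lim F r (2 * PI * phi r / r)) ->
  (forall e t, 0 < e -> e <= t -> t <= s -> phi e <= phi t) ->
  (forall r, 0 < r <= s -> - (2 * PI) * ln (mu (/ r)) <= F r + 2 * PI * a * ln r /\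
                           F r + 2 * PI * a * ln r <= 2 * PI * ln (mu (/ r))) ->
  (forall t, 0 < t <= s -> - a <= phi t) /\ lim0plus phi (- a).
Proof.
  intros Hs Hmu HF Hmono Hb. pose proof PI_RGT_0 as HPI.
  assert (Hge : forall t, 0 < t <= s -> - a <= phi t).
  { intros t Ht. apply Rnot_lt_le. intros Hlt. set (ep := - a - phi t).
    apply (subpoly_contra mu ep (- (F t + 2 * PI * (a + ep) * ln t) / (2 * PI)) t Hmu ltac:(unfold ep; lra) ltac:(lra)).
    intros r Hr.
    assert (HG : 2 * PI * (- a - ep) * ln r - F r <= 2 * PI * (- a - ep) * ln t - F t).
    { apply (mono_G (fun r => 2 * PI * (- a - ep) * ln r - F r) (fun r => 2 * PI * (- a - ep) * / r - 2 * PI * phi r / r)).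
      lra.
      - intros c Hc. apply derivable_pt_lim_minus.
        apply derivable_pt_lim_scal. apply derivable_pt_lim_ln. lra. apply HF. lra.
      - intros c Hc. assert (phi c <= phi t) by (apply Hmono; lra).
        assert (0 < / c) by (apply Rinv_0_lt_compat; lra).
        unfold Rdiv. unfold ep in *.
        replace (2 * PI * (- a - (- a - phi t)) * / c - 2 * PI * phi c * / c) with ((2 * PI * / c) * (phi t - phi c)) by ring.
        apply Rmult_le_pos; nra. }
    destruct (Hb r ltac:(lra)) as [_ Hup].
    assert (Hle : ep * (- ln r) * (2 * PI) <= (ln (mu (/ r)) + - (F t + 2 * PI * (a + ep) * ln t) / (2 * PI)) * (2 * PI)).
    { replace ((ln (mu (/ r)) + - (F t + 2 * PI * (a + ep) * ln t) / (2 * PI)) * (2 * PI))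
        with (2 * PI * ln (mu (/ r)) - (F t + 2 * PI * (a + ep) * ln t)) by (field; lra).
      nra. }
    apply Rmult_le_reg_r in Hle; lra. }
  split; [exact Hge|].
  intros ep Hep.
  assert (Ht0 : exists t0, 0 < t0 <= s /\ phi t0 < - a + ep).
  { apply NNPP. intros Hn.
    assert (Hall : forall t, 0 < t <= s -> - a + ep <= phi t).
    { intros t Ht. apply Rnot_lt_le. intros Hl. apply Hn. exists t. auto. }
    apply (subpoly_contra mu ep ((F s - 2 * PI * (- a + ep) * ln s) / (2 * PI)) s Hmu Hep ltac:(lra)).
    intros r Hr.
    assert (HG : F r - 2 * PI * (- a + ep) * ln r <= F s - 2 * PI * (- a + ep) * ln s).
    { apply (mono_G (fun r => F r - 2 * PI * (- a + ep) * ln r) (fun r => 2 * PI * phi r / r - 2 * PI * (- a + ep) * / r)).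
      lra.
      - intros c Hc. apply derivable_pt_lim_minus. apply HF. lra.
        apply derivable_pt_lim_scal. apply derivable_pt_lim_ln. lra.
      - intros c Hc. assert (- a + ep <= phi c) by (apply Hall; lra).
        assert (0 < / c) by (apply Rinv_0_lt_compat; lra).
        unfold Rdiv.
        replace (2 * PI * phi c * / c - 2 * PI * (- a + ep) * / c) with ((2 * PI * / c) * (phi c - (- a + ep))) by ring.
        apply Rmult_le_pos; nra. }
    destruct (Hb r ltac:(lra)) as [Hlo _].
    assert (Hle : ep * (- ln r) * (2 * PI) <= (ln (mu (/ r)) + (F s - 2 * PI * (- a + ep) * ln s) / (2 * PI)) * (2 * PI)).
    { replace ((ln (mu (/ r)) + (F s - 2 * PI * (- a + ep) * ln s) / (2 * PI)) * (2 * PI))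
        with (2 * PI * ln (mu (/ r)) + (F s - 2 * PI * (- a + ep) * ln s)) by (field; lra).
      nra. }
    apply Rmult_le_reg_r in Hle; lra. }
  destruct Ht0 as [t0 [Ht0 Hp0]].
  exists t0. split. lra. intros t Ht.
  assert (phi t <= phi t0) by (apply Hmono; lra).
  assert (- a <= phi t) by (apply Hge; lra).
  apply Rabs_def1; lra.
Qed.

Theorem mainTheorem3 (s : R) (U : R -> R -> Prop) (g : R -> R -> R)
  (a : R) (mu : R -> R) :
  0 < s <= 1 ->
  open2 U ->
  (forall x y, 0 < x ^ 2 + y ^ 2 <= s ^ 2 -> U x y) ->
  smooth_on U g ->
  semipositive U g ->
  subpolynomial mu ->
  (forall x y, 0 < x ^ 2 + y ^ 2 <= s ^ 2 ->
     - ln (mu (/ sqrt (x ^ 2 + y ^ 2))) <= g x y + a * ln (sqrt (x ^ 2 + y ^ 2))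
     /\ g x y + a * ln (sqrt (x ^ 2 + y ^ 2)) <= ln (mu (/ sqrt (x ^ 2 + y ^ 2)))) ->
  exists L : R,
    lim0plus (fun eps => polar_int (omega_coef g) eps s) L /\
    lim0plus (fun t => fst (eta_circ g t)) (- a) /\
    lim0plus (fun t => snd (eta_circ g t)) 0 /\
    0 <= L /\
    L = fst (eta_circ g s) + a /\
    snd (eta_circ g s) = 0.
Proof.
  intros Hs HU Hdisk Hg Hsp Hmu Hbound.
  pose proof PI_RGT_0 as HPI.
  destruct (annulus U s HU Hs Hdisk) as [s1 [Hss1 Hann]].
  pose proof (omega_nonneg U g HU Hg Hsp) as Hpos.
  assert (HF : forall r, 0 < r < s1 -> derivable_pt_lim (Fg g) r (2 * PI * phi g r / r)).
  { intros r Hr. apply is_derive_Reals.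
    pose proof (Fg_deriv U g HU Hg s1 Hann r Hr) as H.
    rewrite (phi_Gd U g Hg s1 Hann r Hr). 
    assert (Hf : forall G : R, 2 * PI * (/ (2 * PI) * r * G) / r = G) by (intros; field; lra).
    rewrite Hf. exact H. }
  assert (Hmono : forall e t, 0 < e -> e <= t -> t <= s -> phi g e <= phi g t).
  { intros e t He Het Hts.
    apply (mono_G (phi g) (fun r => r * W g r)). exact Het.
    - intros c Hc. apply is_derive_Reals. apply (phi_deriv U g HU Hg s1 Hann). lra.
    - intros c Hc. apply Rmult_le_pos. lra. apply (W_nonneg U g Hg s1 Hann Hpos). lra. }
  assert (Hb : forall r, 0 < r <= s -> - (2 * PI) * ln (mu (/ r)) <= Fg g r + 2 * PI * a * ln r /\
                           Fg g r + 2 * PI * a * ln r <= 2 * PI * ln (mu (/ r))).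
  { intros r Hr.
    assert (Hpt : forall th, - ln (mu (/ r)) - a * ln r <= g (r * cos th) (r * sin th) <= ln (mu (/ r)) - a * ln r).
    { intros th.
      assert (Eq : (r * cos th) ^ 2 + (r * sin th) ^ 2 = r ^ 2).
      { pose proof (sin2_cos2 th) as E. unfold Rsqr in E.
        replace ((r * cos th) ^ 2 + (r * sin th) ^ 2) with (r ^ 2 * (sin th * sin th + cos th * cos th)) by ring.
        rewrite E. ring. }
      assert (Hin : 0 < (r * cos th) ^ 2 + (r * sin th) ^ 2 <= s ^ 2) by (rewrite Eq; split; nra).
      destruct (Hbound _ _ Hin) as [H1 H2]. rewrite Eq in H1, H2.
      rewrite sqrt_pow2 in H1, H2 by lra. lra. }
    assert (Hex : ex_RInt (fun th => g (r * cos th) (r * sin th)) 0 (2 * PI)).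
    { apply (ex_RInt_2d (fun u v => g (u * cos v) (u * sin v))). intros th.
      apply (c20 U). apply (cont_of_C1 U), (Hg1 U g Hg). apply Hann. lra. }
    assert (Hl : CRInt (fun _ => - ln (mu (/ r)) - a * ln r) 0 (2 * PI) <= Fg g r).
    { apply RInt_le. lra. apply ex_RInt_const. exact Hex. intros th _. apply Hpt. }
    assert (Hu : Fg g r <= CRInt (fun _ => ln (mu (/ r)) - a * ln r) 0 (2 * PI)).
    { apply RInt_le. lra. exact Hex. apply ex_RInt_const. intros th _. apply Hpt. }
    rewrite RInt_const_R in Hl, Hu. split; nra. }
  destruct (asymp (phi g) (Fg g) s s1 a mu ltac:(lra) Hmu HF Hmono Hb) as [Hge Hlim].
  exists (phi g s + a). split; [|split; [|split; [|split; [|split]]]].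
  - intros ep Hep. destruct (Hlim ep Hep) as [d [Hd Hd']].
    exists (Rmin d s). split. apply Rmin_pos; lra.
    intros t Ht. pose proof (Rmin_l d s); pose proof (Rmin_r d s).
    rewrite (polar_phi U g HU Hg s1 Hann t s) by lra.
    replace (phi g s - phi g t - (phi g s + a)) with (- (phi g t - - a)) by ring.
    rewrite Rabs_Ropp. apply Hd'. lra.
  - intros ep Hep. destruct (Hlim ep Hep) as [d [Hd Hd']].
    exists (Rmin d s). split. apply Rmin_pos; lra.
    intros t Ht. pose proof (Rmin_l d s); pose proof (Rmin_r d s).
    rewrite (eta_fst U g Hg s1 Hann t) by lra. apply Hd'. lra.
  - intros ep Hep. exists s. split. lra. intros t Ht.
    rewrite (eta_snd U g HU Hg s1 Hann t) by lra. rewrite Rminus_0_r, Rabs_R0. exact Hep.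
  - pose proof (Hge s ltac:(lra)). lra.
  - rewrite (eta_fst U g Hg s1 Hann s) by lra. reflexivity.
  - apply (eta_snd U g HU Hg s1 Hann s). lra.
Qed.
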